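(* Assume the setting of the context. For any $\Delta=(h,\Delta x)$, any $i\in\mathbb{N}$, any $j\in\{1,2\}$, any bounded $\mathsf{U},\mathsf{V}\in B(\mathcal{A}^{\Delta x})$ with $\mathsf{U}_k\le\mathsf{V}_k$ for all $k\in\mathbb{N}$, and any $(\mathsf{q}_1,\mathsf{q}_2),(\mathsf{m}_1,\mathsf{m}_2)\in\mathbb{R}^2$ such that $\theta:=\mathsf{q}_j-\mathsf{m}_j=\max_{k=1,2}\{\mathsf{q}_k-\mathsf{m}_k\}\ge0$, we have $$\mathcal{F}^\Delta_j\big(x_i,(\mathsf{q}_j,\mathsf{q}_{\bar\jmath}),\mathsf{U}+\theta\big)-\mathcal{F}^\Delta_j\big(x_i,(\mathsf{m}_j,\mathsf{m}_{\bar\jmath}),\mathsf{V}\big)\ge\rho\theta.$$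
   Context: Constants: $\rho>0$, $r<\rho$, $0<y_1<y_2$, $\gamma>1$, $\underline{x}\le0$ with $\rho\underline{x}+y_j>0$, $\lambda_1,\lambda_2\ge0$; $\bar\jmath=3-j$; $u(c)=\frac{c^{1-\gamma}}{1-\gamma}$ for $c>0$, $u(0)=-\infty$. Discretization $\Delta=(h,\Delta x)$ with $h,\Delta x>0$ and $\rho h<1$, $\lambda_jh<1$. Grid $x_i=\underline{x}+i\Delta x$, $i\in\mathbb{N}=\{0,1,2,\dots\}$, $\mathcal{A}^{\Delta x}=\{x_i\}$; $B(\mathcal{A}^{\Delta x})$ is the space of bounded real sequences $(\mathsf{U}_k)_{k\in\mathbb{N}}$. The $\mathbb{Q}_1$ basis: $\beta_k(x)=\max\{0,1-|x-x_k|/\Delta x\}$ for $x\ge\underline{x}$ (so $\beta_k\ge0$, $\sum_k\beta_k\equiv1$ on $[\underline{x},\infty)$, $\beta_k(x_i)=\delta_{ik}$). Admissible controls $\mathcal{C}^\Delta_j(x_i)=\{c\ge0: x_i+h(rx_i+y_j-c)\ge\underline{x}\}$, and $s_{i,j}(c)=rx_i+y_j-c$. The scheme: for $(\mathsf{q}_j,\mathsf{q}_{\bar\jmath})\in\mathbb{R}^2$, $\mathsf{U}\in B(\mathcal{A}^{\Delta x})$, $$\mathcal{F}^\Delta_j(x_i,(\mathsf{q}_j,\mathsf{q}_{\bar\jmath}),\mathsf{U})=\rho\mathsf{q}_j-(1-\rho h)\lambda_j(\mathsf{q}_{\bar\jmath}-\mathsf{q}_j)-\sup_{c\in\mathcal{C}^\Delta_j(x_i)}\Big\{u(c)+\frac{(1-\rho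 h)(1-\lambda_jh)}{h}\Big(\sum_k\beta_k(x_i+hs_{i,j}(c))\mathsf{U}_k-\mathsf{q}_j\Big)\Big\}.$$ *)

(* Defs.v *)
From HB Require Import structures.
From mathcomp Require Import all_boot all_order all_algebra.
From mathcomp Require Import all_classical all_reals all_analysis.
Set Implicit Arguments. Unset Strict Implicit. Unset Printing Implicit Defensive.
Import Order.TTheory GRing.Theory Num.Theory.
Local Open Scope ring_scope.
Local Open Scope classical_set_scope.

Section SchemeDefs.
Variable R : realType.

(* the other regime index: jbar = 3 - j, regimes indexed by 'I_2 *)
Definition jbar (j : 'I_2) : 'I_2 := if j == ord0 then ord_max else ord0.

Definition grid (xl dx : R) (i : nat) : R := xl + i%:R * dx.

Definition beta (xl dx : R) (k : nat) (x : R) : R :=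
  Num.max 0 (1 - `|x - grid xl dx k| / dx).

(* sum_k beta_k(x) U_k, as an infinite series (only finitely many nonzero terms) *)
Definition interp (xl dx : R) (U : nat -> R) (x : R) : R :=
  limn (series (fun k : nat => (beta xl dx k x * U k : R^o))).

Definition util (gam c : R) : \bar R :=
  if 0 < c then ((c `^ (1 - gam)) / (1 - gam))%:E else -oo%E.

Definition drift (r : R) (y : 'I_2 -> R) (xl dx : R) (i : nat) (j : 'I_2) (c : R) : R :=
  r * grid xl dx i + y j - c.

Definition admissible (r : R) (y : 'I_2 -> R) (xl h dx : R) (i : nat) (j : 'I_2) : set R :=
  [set c | 0 <= c /\ xl <= grid xl dx i + h * drift r y xl dx i j c].

(* the scheme F^Delta_j(x_i, (qj, qjbar), U), valued in the extended reals
   (the supremum is -oo if no admissible control gives a finite value) *)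
Definition Fscheme (rho r gam xl : R) (y lam : 'I_2 -> R) (h dx : R)
  (j : 'I_2) (i : nat) (qj qjb : R) (U : nat -> R) : \bar R :=
  ((rho * qj - (1 - rho * h) * lam j * (qjb - qj))%:E
   - ereal_sup [set (util gam c +
        ((1 - rho * h) * (1 - lam j * h) / h *
           (interp xl dx U (grid xl dx i + h * drift r y xl dx i j c) - qj))%:E)%E
       | c in admissible r y xl h dx i j])%E.

End SchemeDefs.

(* Main.v *)
Require Import Defs.
From HB Require Import structures.
From mathcomp Require Import all_boot all_order all_algebra.
From mathcomp Require Import all_classical all_reals all_analysis.
From mathcomp Require Import ring lra.
Import Order.TTheory GRing.Theory Num.Theory.
Local Open Scope ring_scope.

Section H.
Variable R : realType.
Variables (xl dx : R).
Hypothesis dx0 : 0 < dx.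

Lemma beta_ge0 k x : 0 <= beta xl dx k x.
Proof. by rewrite /beta le_max lexx. Qed.

Lemma beta_eq k x : beta xl dx k x = Num.max 0 (1 - `|(x - xl) / dx - k%:R|).
Proof.
rewrite /beta /grid; congr (Num.max 0 (1 - _)).
have -> : (x - xl) / dx - k%:R = (x - (xl + k%:R * dx)) / dx.
  by field; rewrite gt_eqF.
by rewrite normrM (gtr0_norm (x:=dx^-1)) // invr_gt0.
Qed.

Lemma beta_far k x : (x - xl) / dx + 1 <= k%:R -> beta xl dx k x = 0.
Proof.
move=> H; rewrite beta_eq max_l // subr_le0.
rewrite ler0_norm; last by lra.
lra.
Qed.

Lemma sum_beta_le1 x N : \sum_(k < N) beta xl dx k x <= 1.
Proof.
set t := (x - xl) / dx.
suff : \sum_(k < N) beta xl dx k x <= 1 /\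
       \sum_(k < N) beta xl dx k x <= Num.max 0 (N%:R - t) by case.
elim: N => [|N [IH1 IH2]]; first by rewrite big_ord0 ler01 le_max lexx.
rewrite big_ord_recr /= beta_eq -/t.
set S := \sum_(i < N) _ in IH1 IH2 *.
have SN : (N.+1%:R : R) = N%:R + 1 by rewrite -natr1.
rewrite SN.
have mx : forall a : R, (0 <= a /\ Num.max 0 a = a) \/ (a < 0 /\ Num.max 0 a = 0).
  move=> a; case: (lerP 0 a) => Ha; [left; split => //; exact: max_r | right; split => //; exact: max_l; exact: ltW].
case: (lerP N%:R t) => Ht.
- move: IH2; case: (mx (N%:R - t)) => [[H1 ->]|[H1 ->]];
  case: (mx (1 - (t - N%:R))) => [[H2 ->]|[H2 ->]];
  case: (mx (N%:R + 1 - t)) => [[H3 ->]|[H3 ->]]; move=> IH2; split; lra.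
- move: IH2; case: (mx (N%:R - t)) => [[H1 ->]|[H1 ->]];
  case: (mx (1 - (N%:R - t))) => [[H2 ->]|[H2 ->]];
  case: (mx (N%:R + 1 - t)) => [[H3 ->]|[H3 ->]]; move=> IH2; split; lra.
Qed.

Lemma interp_sum x : exists N0 : nat, forall F : nat -> R,
  interp xl dx F x = \sum_(k < N0) beta xl dx k x * F k.
Proof.
set t := (x - xl) / dx.
have Hb := @archi_boundP R (`|t| + 1) (addr_ge0 (normr_ge0 _) ler01).
set N0 := Num.Def.archi_bound _ in Hb.
exists N0 => F.
rewrite /interp.
apply: norm_lim_near_cst.
near=> n.
have Hn : (N0 <= n)%N by near: n; exists N0.
rewrite /series /= -(big_mkord xpredT (fun k => beta xl dx k x * F k)).
rewrite (big_cat_nat (leq0n N0) Hn) /=.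
rewrite [X in _ + X]big1_seq ?addr0.
  by rewrite big_mkord.
move=> k /andP[_]; rewrite mem_index_iota => /andP[Hk _].
rewrite beta_far ?mul0r //.
rewrite -/t.
have : t <= `|t| by apply: ler_norm.
have : (N0%:R : R) <= k%:R by rewrite ler_nat.
move: Hb; lra.
Unshelve. all: by end_near.
Qed.
End H.
Lemma ext (R : realType) (a b c : R) (SU SV : \bar R) : b + c <= a -> (SU <= SV)%E ->
  ((b%:E - SV) + c%:E <= a%:E - SU)%E.
Proof.
move=> H1; case: SU => [u| |]; case: SV => [v| |] //=; rewrite ?lee_fin //.
- by move=> H2; lra.
- by move=> _; rewrite addeNy addNye leNye.
- by move=> _; rewrite addey ?leey.
Qed.

Theorem mainTheorem10 (R : realType) (rho r gam xl : R) (y lam : 'I_2 -> R)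
  (h dx : R) (i : nat) (j : 'I_2) (U V : nat -> R) (q m : 'I_2 -> R) :
  0 < rho -> r < rho -> 0 < y ord0 -> y ord0 < y ord_max -> 1 < gam ->
  xl <= 0 -> (forall k : 'I_2, 0 < rho * xl + y k) ->
  (forall k : 'I_2, 0 <= lam k) ->
  0 < h -> 0 < dx -> rho * h < 1 -> (forall k : 'I_2, lam k * h < 1) ->
  (exists M : R, forall k, `|U k| <= M) ->
  (exists M : R, forall k, `|V k| <= M) ->
  (forall k, U k <= V k) ->
  (forall k : 'I_2, q k - m k <= q j - m j) ->
  0 <= q j - m j ->
  (Fscheme rho r gam xl y lam h dx j i (q j) (q (jbar j))
       (fun k => (U k + (q j - m j))%R)
   >= Fscheme rho r gam xl y lam h dx j i (m j) (m (jbar j)) V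
      + (rho * (q j - m j))%:E)%E.
Proof.
move=> rho0 _ _ _ _ _ _ lam0 h0 dx0 rhoh lamh _ _ UV Hq th0.
set th := q j - m j in Hq th0 *.
have Hint : forall x, interp xl dx (fun k => U k + th) x - q j <= interp xl dx V x - m j.
  move=> x; have [N0 HN] := @interp_sum R xl dx dx0 x.
  rewrite !HN.
  have -> : \sum_(k < N0) beta xl dx k x * (U k + th) =
            \sum_(k < N0) beta xl dx k x * U k + th * \sum_(k < N0) beta xl dx k x.
    rewrite mulr_sumr -big_split /=; apply: eq_bigr => k _; by rewrite mulrDr [th * _]mulrC.
  have H1 : \sum_(k < N0) beta xl dx k x * U k <= \sum_(k < N0) beta xl dx k x * V k.
    by apply: ler_sum => k _; apply: ler_wpM2l; [exact: beta_ge0|exact: UV].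
  have H2 : th * \sum_(k < N0) beta xl dx k x <= th * 1.
    by apply: ler_wpM2l => //; exact: (@sum_beta_le1 R xl dx dx0).
  move: H1 H2; rewrite mulr1.
  set A := \sum_(k < N0) _ * U k; set B := \sum_(k < N0) _ * V k.
  set C := \sum_(k < N0) beta xl dx k x.
  rewrite /th; clearbody A B C; move=> H1 H2; lra.
have K0 : 0 <= (1 - rho * h) * (1 - lam j * h) / h.
  apply: divr_ge0; last exact: ltW.
  apply: mulr_ge0; [move: rhoh; clear; lra | have := lamh j; clear; lra].
rewrite /Fscheme.
apply: ext.
- have Hb := Hq (jbar j).
  have L := lam0 j.
  have : 0 <= (1 - rho * h) * lam j * (th - (q (jbar j) - m (jbar j))).
    apply: mulr_ge0; last by move: Hb; clear; lra.
    apply: mulr_ge0 => //; move: rhoh; clear; lra.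
  rewrite /th; clear; lra.
- apply/ereal_supP => _ [c Hc <-].
  apply: le_ereal_sup_tmp.
  eexists; first by exists c.
  rewrite leeD2l // lee_fin.
  by apply: ler_wpM2l => //; apply: Hint.
Qed.
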